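(* Fix a reflection matrix $\mathbf\Phi$ and let $(\{\mathbf W_k^\star\}_{k\in\mathcal K},\mathbf R_0^\star,u^\star)$ be an optimal solution of problem (SDR3.3). Define, for each $k\in\mathcal K$, $$\mathbf w_k^{\mathrm{opt,I}}=(\mathbf h_k^H\mathbf W_k^\star\mathbf h_k)^{-1/2}\,\mathbf W_k^\star\mathbf h_k,\qquad \mathbf R_0^{\mathrm{opt,I}}=\mathbf R_0^\star+\sum_{k\in\mathcal K}\mathbf W_k^\star-\sum_{k\in\mathcal K}\mathbf w_k^{\mathrm{opt,I}}(\mathbf w_k^{\mathrm{opt,I}})^H .$$ Then these are well defined, $\mathbf R_0^{\mathrm{opt,I}}\succeq\mathbf 0$, and $(\{\mathbf w_k^{\mathrm{opt,I}}\},\mathbf R_0^{\mathrm{opt,I}},u^\star)$ is an optimal solution of problem (P3.2). In particular (P3.2) and (SDR3.3) have the same optimal value.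
   Context: Let $M,N,K\ge1$ be integers and $\mathcal K=\{1,\dots,K\}$. Fixed data: $\mathbf G\in\mathbb C^{N\times M}$, $\mathbf h_{\mathrm d,k}\in\mathbb C^{M}$, $\mathbf h_{\mathrm r,k}\in\mathbb C^{N}$ ($k\in\mathcal K$), thresholds $\Gamma_k>0$, noise powers $\sigma_k^2>0$, power budget $P_0>0$, an angle $\theta$, spacing $d>0$ and wavelength $\lambda>0$. A reflection matrix is $\mathbf\Phi=\mathrm{diag}(\mathbf v)$, $\mathbf v\in\mathbb C^N$, $|v_n|=1$. For given $\mathbf\Phi$: $\mathbf h_k=\mathbf h_{\mathrm d,k}+\mathbf G^H\mathbf\Phi^H\mathbf h_{\mathrm r,k}$, $\mathbf H_k=\mathbf h_k\mathbf h_k^H$. Let $\mathbf a(\theta)\in\mathbb C^N$ have entries $e^{j2\pi (n-1)d\sin\theta/\lambda}$, $n=1,\dots,N$, and $\dot{\mathbf a}(\theta)$ its derivative in $\theta$; put $\mathbf b=\mathbf G^T\mathbf\Phi^T\mathbf a(\theta)$, $\dot{\mathbf b}=\mathbf G^T\mathbf\Phi^T\dot{\mathbf a}(\theta)$, $\mathbf B=\mathbf b\mathbf b^T$, $\dot{\mathbf B}=\dot{\mathbf b}\mathbf b^T+\mathbf b\dot{\mathbf b}^T$. For Hermitian $\mathbf R$ and $u\in\mathbb R$ let $$\mathcal M(\mathbf R,u)=\begin{bmatrix}\mathrm{tr}(\dot{\mathbf B}\mathbf R\dot{\mathbf B}^H)-u & \mathrm{tr}(\mathbf B\mathbf R\dot{\mathbf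 B}^H)\\ \mathrm{tr}(\dot{\mathbf B}\mathbf R\mathbf B^H) & \mathrm{tr}(\mathbf B\mathbf R\mathbf B^H)\end{bmatrix}$$ (when $\mathrm{tr}(\mathbf B\mathbf R\mathbf B^H)>0$, $\mathcal M(\mathbf R,u)\succeq\mathbf 0$ iff $u\le \mathrm{tr}(\dot{\mathbf B}\mathbf R\dot{\mathbf B}^H)-|\mathrm{tr}(\mathbf B\mathbf R\dot{\mathbf B}^H)|^2/\mathrm{tr}(\mathbf B\mathbf R\mathbf B^H)$, the quantity inversely proportional to the DoA CRB). Type-I SINR: $\gamma_k^{\mathrm I}=|\mathbf h_k^H\mathbf w_k|^2/(\sum_{i\ne k}|\mathbf h_k^H\mathbf w_i|^2+\mathbf h_k^H\mathbf R_0\mathbf h_k+\sigma_k^2)$. Problem (P3.2) (fixed $\mathbf\Phi$): maximize $u$ over $\mathbf w_k\in\mathbb C^M$, Hermitian $\mathbf R_0\succeq\mathbf 0$, $u\in\mathbb R$, subject to $\mathcal M(\sum_k\mathbf w_k\mathbf w_k^H+\mathbf R_0,u)\succeq\mathbf 0$, $\gamma_k^{\mathrm I}\ge\Gamma_k$ for all $k$, and $\sum_k\|\mathbf w_k\|^2+\mathrm{tr}(\mathbf R_0)\le P_0$. Problem (SDR3.3) (fixed $\mathbf\Phi$): maximize $u$ over Hermitian $\mathbf W_k\succeq\mathbf 0$, $\mathbf R_0\succeq\mathbf 0$, $u\in\mathbb R$, subject to $\mathcal M(\sum_k\mathbf W_k+\mathbf R_0,u)\succeq\mathbf 0$, $(1+\tfrac1{\Gamma_k})\mathrm{tr}(\mathbf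 H_k\mathbf W_k)-\mathrm{tr}(\mathbf H_k(\sum_i\mathbf W_i+\mathbf R_0))\ge\sigma_k^2$ for all $k$, and $\sum_k\mathrm{tr}(\mathbf W_k)+\mathrm{tr}(\mathbf R_0)\le P_0$. *)

(* Defs.v *)
From HB Require Import structures.
From mathcomp Require Import all_boot all_order all_algebra.
From mathcomp Require Import reals topology normedtype derive trigo.
From mathcomp Require Import complex.
Set Implicit Arguments. Unset Strict Implicit. Unset Printing Implicit Defensive.
Import Order.TTheory GRing.Theory Num.Theory.
Import numFieldNormedType.Exports.
Local Open Scope ring_scope.

Definition adjm (R : rcfType) (m n : nat) (A : 'M[R[i]]_(m, n)) : 'M[R[i]]_(n, m) :=
  (map_mx (@conjc R) A)^T.

(* Hermitian positive semidefinite: A = A^H and x^H A x >= 0 (real, nonneg) *)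
Definition psdmx (R : rcfType) (n : nat) (A : 'M[R[i]]_n) : Prop :=
  A = adjm A /\ forall x : 'cV[R[i]]_n, 0 <= (adjm x *m A *m x) 0 0.

Definition Phi (R : rcfType) (N : nat) (v : 'cV[R[i]]_N) : 'M[R[i]]_N := diag_mx v^T.

Definition chan (R : rcfType) (M N : nat) (G : 'M[R[i]]_(N, M))
  (hd : 'cV[R[i]]_M) (hr : 'cV[R[i]]_N) (v : 'cV[R[i]]_N) : 'cV[R[i]]_M :=
  hd + adjm G *m adjm (Phi v) *m hr.

(* phase of the n-th entry (0-indexed, i.e. n = paper's n - 1) of a(t) *)
Definition phase (R : realType) (d lam : R) (n : nat) (t : R) : R :=
  2 * pi * n%:R * d * sin t / lam.

Definition steer (R : realType) (N : nat) (d lam theta : R) : 'cV[R[i]]_N :=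
  \col_(n < N) Complex (cos (phase d lam n theta)) (sin (phase d lam n theta)).

Definition steer_deriv (R : realType) (N : nat) (d lam theta : R) : 'cV[R[i]]_N :=
  \col_(n < N) Complex ((derive1 (fun t : R => cos (phase d lam n t))) theta)
                       ((derive1 (fun t : R => sin (phase d lam n t))) theta).

Definition bvec (R : rcfType) (M N : nat) (G : 'M[R[i]]_(N, M)) (v : 'cV[R[i]]_N)
  (a : 'cV[R[i]]_N) : 'cV[R[i]]_M := G^T *m (Phi v)^T *m a.

Definition CRBmx (R : rcfType) (M : nat) (B Bd Rm : 'M[R[i]]_M) (u : R) : 'M[R[i]]_2 :=
  \matrix_(i < 2, j < 2)
    if val i == 0%N then
      (if val j == 0%N then \tr (Bd *m Rm *m adjm Bd) - u%:C%C else \tr (B *m Rm *m adjm Bd))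
    else
      (if val j == 0%N then \tr (Bd *m Rm *m adjm B) else \tr (B *m Rm *m adjm B)).

Definition sinr1 (R : rcfType) (M K : nat) (h : 'I_K -> 'cV[R[i]]_M)
  (sigma2 : 'I_K -> R) (w : 'I_K -> 'cV[R[i]]_M) (R0 : 'M[R[i]]_M) (k : 'I_K) : R[i] :=
  `|(adjm (h k) *m w k) 0 0| ^+ 2 /
  (\sum_(i < K | i != k) `|(adjm (h k) *m w i) 0 0| ^+ 2
   + (adjm (h k) *m R0 *m h k) 0 0 + (sigma2 k)%:C%C).

Definition P32_feasible (R : rcfType) (M K : nat) (h : 'I_K -> 'cV[R[i]]_M)
  (B Bd : 'M[R[i]]_M) (Gam sigma2 : 'I_K -> R) (P0 : R)
  (w : 'I_K -> 'cV[R[i]]_M) (R0 : 'M[R[i]]_M) (u : R) : Prop :=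
  [/\ psdmx R0,
      psdmx (CRBmx B Bd (\sum_(k < K) w k *m adjm (w k) + R0) u),
      (forall k, (Gam k)%:C%C <= sinr1 h sigma2 w R0 k) &
      \sum_(k < K) (adjm (w k) *m w k) 0 0 + \tr R0 <= P0%:C%C].

Definition P32_optimal (R : rcfType) (M K : nat) (h : 'I_K -> 'cV[R[i]]_M)
  (B Bd : 'M[R[i]]_M) (Gam sigma2 : 'I_K -> R) (P0 : R)
  (w : 'I_K -> 'cV[R[i]]_M) (R0 : 'M[R[i]]_M) (u : R) : Prop :=
  P32_feasible h B Bd Gam sigma2 P0 w R0 u /\
  forall w' R0' u', P32_feasible h B Bd Gam sigma2 P0 w' R0' u' -> u' <= u.

Definition SDR33_feasible (R : rcfType) (M K : nat) (h : 'I_K -> 'cV[R[i]]_M)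
  (B Bd : 'M[R[i]]_M) (Gam sigma2 : 'I_K -> R) (P0 : R)
  (W : 'I_K -> 'M[R[i]]_M) (R0 : 'M[R[i]]_M) (u : R) : Prop :=
  [/\ forall k, psdmx (W k),
      psdmx R0,
      psdmx (CRBmx B Bd (\sum_(k < K) W k + R0) u),
      (forall k, (sigma2 k)%:C%C <=
         (1 + (Gam k)^-1)%:C%C * \tr (h k *m adjm (h k) *m W k)
         - \tr (h k *m adjm (h k) *m (\sum_(i < K) W i + R0))) &
      \sum_(k < K) \tr (W k) + \tr R0 <= P0%:C%C].

Definition SDR33_optimal (R : rcfType) (M K : nat) (h : 'I_K -> 'cV[R[i]]_M)
  (B Bd : 'M[R[i]]_M) (Gam sigma2 : 'I_K -> R) (P0 : R)
  (W : 'I_K -> 'M[R[i]]_M) (R0 : 'M[R[i]]_M) (u : R) : Prop :=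
  SDR33_feasible h B Bd Gam sigma2 P0 W R0 u /\
  forall W' R0' u', SDR33_feasible h B Bd Gam sigma2 P0 W' R0' u' -> u' <= u.

(* Main.v *)
Require Import Defs.
From HB Require Import structures.
From mathcomp Require Import all_boot all_order all_algebra.
From mathcomp Require Import reals topology normedtype derive trigo.
From mathcomp Require Import complex ring.
Import Order.TTheory GRing.Theory Num.Theory.
Local Open Scope ring_scope.

Set Implicit Arguments. Unset Strict Implicit.

Section H.
Variable R : rcfType.
Local Notation C := R[i].

Lemma adjmE m n (A : 'M[C]_(m,n)) i j : adjm A i j = conjc (A j i).
Proof. by rewrite /adjm !mxE. Qed.

Lemma adjmK m n (A : 'M[C]_(m,n)) : adjm (adjm A) = A.
Proof. by apply/matrixP=> i j; rewrite !adjmE conjcK. Qed.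

Lemma adjmD m n (A B : 'M[C]_(m,n)) : adjm (A + B) = adjm A + adjm B.
Proof. by apply/matrixP=> i j; rewrite !(adjmE, mxE) rmorphD. Qed.

Lemma adjmB m n (A B : 'M[C]_(m,n)) : adjm (A - B) = adjm A - adjm B.
Proof. by apply/matrixP=> i j; rewrite !(adjmE, mxE) rmorphB. Qed.

Lemma addE m n (A B : 'M[C]_(m,n)) i j : (A + B) i j = A i j + B i j.
Proof. by rewrite mxE. Qed.
Lemma oppE m n (A : 'M[C]_(m,n)) i j : (- A) i j = - A i j.
Proof. by rewrite mxE. Qed.
Lemma sclE m n c (A : 'M[C]_(m,n)) i j : (c *: A) i j = c * A i j.
Proof. by rewrite mxE. Qed.

Lemma adjmZ m n (a : C) (A : 'M[C]_(m,n)) : adjm (a *: A) = conjc a *: adjm A.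
Proof. by apply/matrixP=> i j; rewrite !(adjmE, mxE) rmorphM. Qed.

Lemma adjmM m n p (A : 'M[C]_(m,n)) (B : 'M[C]_(n,p)) :
  adjm (A *m B) = adjm B *m adjm A.
Proof.
apply/matrixP=> i j; rewrite !(adjmE, mxE) rmorph_sum; apply: eq_bigr => k _.
by rewrite rmorphM !adjmE mulrC.
Qed.

Lemma adjm_sum m n (I : Type) (r : seq I) (P : pred I) (F : I -> 'M[C]_(m,n)) :
  adjm (\sum_(i <- r | P i) F i) = \sum_(i <- r | P i) adjm (F i).
Proof.
apply/matrixP=> i j; rewrite adjmE !summxE rmorph_sum; apply: eq_bigr => k _.
by rewrite adjmE.
Qed.

Lemma mul11 m n (A : 'M[C]_(m,1)) (B : 'M[C]_(1,n)) i j :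
  (A *m B) i j = A i 0 * B 0 j.
Proof. by rewrite mxE big_ord1. Qed.

Lemma tr_col n (x : 'cV[C]_n) (Y : 'M[C]_(1,n)) : \tr (x *m Y) = (Y *m x) 0 0.
Proof. by rewrite mxtrace_mulC /mxtrace big_ord1. Qed.

Definition ip n (x : 'cV[C]_n) (A : 'M[C]_n) (y : 'cV[C]_n) := (adjm x *m A *m y) 0 0.

Lemma tr_hh n (h : 'cV[C]_n) A : \tr (h *m adjm h *m A) = ip h A h.
Proof. by rewrite -mulmxA tr_col /ip. Qed.

Lemma conj11 m (x y : 'cV[C]_m) :
  conjc ((adjm x *m y) 0 0) = (adjm y *m x) 0 0.
Proof. by rewrite -adjmE adjmM adjmK. Qed.

Lemma ip_conj n (x y : 'cV[C]_n) A : conjc (ip x A y) = ip y (adjm A) x.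
Proof. by rewrite /ip -adjmE !adjmM adjmK mulmxA. Qed.

Lemma ip_outer n (x y u v : 'cV[C]_n) :
  ip x (u *m adjm v) y = (adjm x *m u) 0 0 * (adjm v *m y) 0 0.
Proof. by rewrite /ip mulmxA -(mulmxA (adjm x *m u)) mul11. Qed.

Lemma ipWW n (x h : 'cV[C]_n) W :
  ip x (W *m h *m adjm h *m W) x = ip x W h * ip h W x.
Proof. by rewrite /ip -mul11 !mulmxA. Qed.

Lemma ipD n (x y : 'cV[C]_n) A B : ip x (A + B) y = ip x A y + ip x B y.
Proof. by rewrite /ip !(mulmxDr, mulmxDl, mulmxN, mulNmx) !(addE, oppE). Qed.
Lemma ipB n (x y : 'cV[C]_n) A B : ip x (A - B) y = ip x A y - ip x B y.
Proof. by rewrite /ip !(mulmxDr, mulmxDl, mulmxN, mulNmx) !(addE, oppE). Qed.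
Lemma ipZ n (x y : 'cV[C]_n) c A : ip x (c *: A) y = c * ip x A y.
Proof. by rewrite /ip -scalemxAr -scalemxAl sclE. Qed.
Lemma ip_sum n (x y : 'cV[C]_n) (I : Type) (r : seq I) (P : pred I) F :
  ip x (\sum_(i <- r | P i) F i) y = \sum_(i <- r | P i) ip x (F i) y.
Proof. by rewrite /ip mulmx_sumr mulmx_suml summxE. Qed.

Lemma ipDl n (x y z : 'cV[C]_n) A : ip (x + y) A z = ip x A z + ip y A z.
Proof. by rewrite /ip ?adjmB ?adjmD !(mulmxDr, mulmxDl, mulmxN, mulNmx) !(addE, oppE). Qed.
Lemma ipBl n (x y z : 'cV[C]_n) A : ip (x - y) A z = ip x A z - ip y A z.
Proof. by rewrite /ip ?adjmB ?adjmD !(mulmxDr, mulmxDl, mulmxN, mulNmx) !(addE, oppE). Qed.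
Lemma ipZl n (x z : 'cV[C]_n) c A : ip (c *: x) A z = conjc c * ip x A z.
Proof. by rewrite /ip adjmZ -!scalemxAl sclE. Qed.
Lemma ipBr n (x y z : 'cV[C]_n) A : ip z A (x - y) = ip z A x - ip z A y.
Proof. by rewrite /ip ?adjmB ?adjmD !(mulmxDr, mulmxDl, mulmxN, mulNmx) !(addE, oppE). Qed.
Lemma ipZr n (x z : 'cV[C]_n) c A : ip z A (c *: x) = c * ip z A x.
Proof. by rewrite /ip -scalemxAr sclE. Qed.

Lemma normC2 (z : C) : `|z| ^+ 2 = z * conjc z.
Proof.
rewrite -add_Re2_Im2; case: z => a b /=.
by apply/eqP; rewrite eq_complex /= !expr2; apply/andP; split; apply/eqP; ring.
Qed.

Lemma pos_real (a : C) : 0 < a -> a = (complex.Re a)%:C%C.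
Proof.
rewrite ltcE => /andP[/eqP H _]; case: a H => x y /= ->; by [].
Qed.

Lemma key_id n (W : 'M[C]_n) (h x : 'cV[C]_n) :
  W = adjm W -> 0 < ip h W h ->
  ip x (W - (ip h W h)^-1 *: (W *m h *m adjm h *m W)) x =
  ip (x - (ip h W x / ip h W h) *: h) W (x - (ip h W x / ip h W h) *: h).
Proof.
move=> HW Ha.
have ca : conjc (ip h W h) = ip h W h by rewrite (pos_real Ha) conjc_real.
have cx : conjc (ip h W x) = ip x W h by rewrite ip_conj -HW.
have a0 : ip h W h != 0 by rewrite gt_eqF.
have ct : conjc (ip h W x / ip h W h) = ip x W h / ip h W h.
  by rewrite rmorphM fmorphV /= cx ca.
rewrite ipB ipZ ipWW !ipBl !ipBr !ipZl !ipZr ct.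
by field.
Qed.

Lemma g2gen n (x w : 'cV[C]_n) : `|(adjm x *m w) 0 0| ^+ 2 = ip x (w *m adjm w) x.
Proof. by rewrite normC2 conj11 ip_outer. Qed.

Lemma cpos (r : R) : 0 < r -> 0 < r%:C%C :> C.
Proof. by move=> hr; rewrite ltcE /= eqxx hr. Qed.

Lemma Re_pos (a : C) : 0 < a -> 0 < complex.Re a.
Proof. by rewrite ltcE => /andP[]. Qed.

Lemma c1inv (r : R) : (1 + r^-1)%:C%C = 1 + (r%:C%C)^-1 :> C.
Proof. by rewrite rmorphD rmorph1 fmorphV. Qed.

Lemma sumD1 (K : nat) (F : 'I_K -> C) k :
  \sum_(i < K) F i = F k + \sum_(i < K | i != k) F i.
Proof. by rewrite (bigD1 k). Qed.

End H.

Lemma trDB (F : comRingType) n (A B D : 'M[F]_n) : \tr (A + B - D) = \tr A + \tr B - \tr D.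
Proof. by rewrite mxtraceD mxtraceD -scaleN1r mxtraceZ mulN1r. Qed.
Lemma tr_sum (F : comRingType) n K (G : 'I_K -> 'M[F]_n) :
  \tr (\sum_(i < K) G i) = \sum_(i < K) \tr (G i).
Proof. by rewrite /mxtrace; under eq_bigr do rewrite summxE; rewrite exchange_big. Qed.

Lemma gen1 (V : zmodType) (x y r : V) : y + r = x + y + r - x.
Proof. by rewrite (addrC x) addrAC addrK. Qed.

Lemma fid1 (F : fieldType) (g gk Q r s : F) : g != 0 ->
  (1 + g^-1) * gk - (gk + Q + r) - s = g^-1 * (gk - (Q + r + s) * g).
Proof. by move=> g0; field. Qed.

Lemma fid2 (F : fieldType) (g a T s : F) : g != 0 ->
  a - g * (T - a + s) = g * ((1 + g^-1) * a - (s + T)).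
Proof. by move=> g0; field. Qed.

Unset Implicit Arguments.
Theorem proposition6 (R : realType) (M N K : nat)
  (hM : (0 < M)%N) (hN : (0 < N)%N) (hK : (0 < K)%N)
  (G : 'M[R[i]]_(N, M)) (hd : 'I_K -> 'cV[R[i]]_M) (hr : 'I_K -> 'cV[R[i]]_N)
  (Gam sigma2 : 'I_K -> R) (P0 theta d lam : R)
  (hGam : forall k, 0 < Gam k) (hsigma2 : forall k, 0 < sigma2 k) (hP0 : 0 < P0)
  (hd_pos : 0 < d) (hlam : 0 < lam)
  (v : 'cV[R[i]]_N) (hv : forall n, `|v n 0| = 1)
  (Wst : 'I_K -> 'M[R[i]]_M) (R0st : 'M[R[i]]_M) (ust : R) :
  let h := fun k => chan G (hd k) (hr k) v in
  let b := bvec G v (steer N d lam theta) in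
  let bd := bvec G v (steer_deriv N d lam theta) in
  let B := b *m b^T in
  let Bd := bd *m b^T + b *m bd^T in
  SDR33_optimal h B Bd Gam sigma2 P0 Wst R0st ust ->
  (forall k, 0 < (adjm (h k) *m Wst k *m h k) 0 0) /\
  let wopt := fun k =>
    ((Num.sqrt (complex.Re ((adjm (h k) *m Wst k *m h k) 0 0)))^-1)%:C%C *: (Wst k *m h k) in
  let R0opt := R0st + \sum_(k < K) Wst k - \sum_(k < K) wopt k *m adjm (wopt k) in
  psdmx R0opt /\ P32_optimal h B Bd Gam sigma2 P0 wopt R0opt ust.
Proof.
move=> h b bd B Bd [[psdW psdR0 psdCRB hs hpow] opt].
have Tge0 : forall x, 0 <= ip x (\sum_(i < K) Wst i + R0st) x.
  move=> x; rewrite ipD ip_sum; apply: addr_ge0; last exact: psdR0.2.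
  by apply: sumr_ge0 => i _; exact: (psdW i).2.
have Gpos : forall k, 0 < (Gam k)%:C%C :> R[i] by move=> k; apply: cpos.
have hsk : forall k, (sigma2 k)%:C%C + ip (h k) (\sum_(i < K) Wst i + R0st) (h k)
    <= (1 + (Gam k)^-1)%:C%C * ip (h k) (Wst k) (h k).
  by move=> k; have := hs k; rewrite lerBrDr !tr_hh.
have apos : forall k, 0 < ip (h k) (Wst k) (h k).
  move=> k; have H1 : 0 < (1 + (Gam k)^-1)%:C%C * ip (h k) (Wst k) (h k).
    apply: lt_le_trans (cpos (hsigma2 k)) _; apply: le_trans (hsk k).
    by rewrite lerDl.
  rewrite pmulr_rgt0 // in H1; apply: cpos.
  by rewrite addr_gt0 // invr_gt0.
split; first exact: apos.
move=> wopt R0opt.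
have ww : forall k, wopt k *m adjm (wopt k) =
   (ip (h k) (Wst k) (h k))^-1 *: (Wst k *m h k *m adjm (h k) *m Wst k).
  move=> k; rewrite /wopt adjmZ adjmM -(psdW k).1 conjc_real -scalemxAl -scalemxAr.
  rewrite scalerA !mulmxA; congr (_ *: _).
  rewrite -rmorphM -expr2 exprVn sqr_sqrtr; last exact/ltW/Re_pos/apos.
  by rewrite fmorphV /= -(pos_real (apos k)).
have HS : \sum_(k < K) wopt k *m adjm (wopt k) + R0opt = \sum_(k < K) Wst k + R0st.
  by rewrite /R0opt addrC subrK addrC.
have Hr : psdmx R0opt.
  split.
    rewrite /R0opt adjmB adjmD !adjm_sum -(psdR0.1).
    congr (_ + _ - _); apply: eq_bigr => i _; first exact: (psdW i).1.
    by rewrite adjmM adjmK.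
  move=> x; rewrite -/(ip x R0opt x) /R0opt ipB ipD !ip_sum -addrA -sumrB.
  apply: addr_ge0; first exact: psdR0.2.
  apply: sumr_ge0 => i _; rewrite -ipB ww key_id //; first exact: (psdW i).2.
  exact: (psdW i).1.
have Dpos : forall (w : 'I_K -> 'cV[R[i]]_M) R0 k, psdmx R0 ->
   0 < \sum_(i < K | i != k) `|(adjm (h k) *m w i) 0 0| ^+ 2
       + (adjm (h k) *m R0 *m h k) 0 0 + (sigma2 k)%:C%C.
  move=> w R0 k hR; apply: lt_le_trans (cpos (hsigma2 k)) _; rewrite lerDr.
  apply: addr_ge0; last exact: hR.2.
  by apply: sumr_ge0 => i _; apply: exprn_ge0; apply: normr_ge0.
split; first exact: Hr.
split; last first.
  move=> w' R0' u' [psdR0' psdC' hs' hp'].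
  apply: (opt (fun k => w' k *m adjm (w' k)) R0' u').
  split.
  - move=> k; split; first by rewrite adjmM adjmK.
    move=> x; change (0 <= ip x (w' k *m adjm (w' k)) x).
    by rewrite ip_outer -conj11 mulrC mulcJ_ge0.
  - exact: psdR0'.
  - exact: psdC'.
  - move=> k; rewrite !tr_hh ipD ip_sum.
    have := hs' k; rewrite /sinr1 ler_pdivlMr; last exact: Dpos.
    move=> H; rewrite (sumD1 _ k) c1inv.
    have Q' : \sum_(i < K | i != k) ip (h k) (w' i *m adjm (w' i)) (h k) =
      \sum_(i < K | i != k) `|(adjm (h k) *m w' i) 0 0| ^+ 2.
      by apply: eq_bigr => i _; rewrite g2gen.
    rewrite Q' -!g2gen -subr_ge0.
    rewrite -/(ip (h k) R0' (h k)) in H.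
    set gk := `|(adjm (h k) *m w' k) 0 0| ^+ 2 in H *.
    set Q := \sum_(i < K | i != k) _ in H *.
    set r := ip (h k) R0' (h k) in H *.
    have G0 : (Gam k)%:C%C != 0 :> R[i] by rewrite gt_eqF.
    have -> : (1 + ((Gam k)%:C%C)^-1) * gk - (gk + Q + r) - (sigma2 k)%:C%C =
       ((Gam k)%:C%C)^-1 * (gk - (Q + r + (sigma2 k)%:C%C) * (Gam k)%:C%C).
      exact: fid1.
    apply: mulr_ge0; first by rewrite invr_ge0 ltW.
    by rewrite subr_ge0 mulrC.
  - have -> : \sum_(k < K) \tr (w' k *m adjm (w' k)) = \sum_(k < K) (adjm (w' k) *m w' k) 0 0.
      by apply: eq_bigr => k _; rewrite tr_col.
    exact: hp'.
split.
- exact: Hr.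
- by rewrite HS.
- move=> k; rewrite /sinr1 ler_pdivlMr; last exact: Dpos.
  have gk : ip (h k) (wopt k *m adjm (wopt k)) (h k) = ip (h k) (Wst k) (h k).
    rewrite ww ipZ ipWW mulrA mulVf ?mul1r //; by rewrite gt_eqF //; exact: apos.
  have gk2 : `|(adjm (h k) *m wopt k) 0 0| ^+ 2 = ip (h k) (Wst k) (h k).
    by rewrite g2gen gk.
  have Hs : `|(adjm (h k) *m wopt k) 0 0| ^+ 2
      + \sum_(i < K | i != k) `|(adjm (h k) *m wopt i) 0 0| ^+ 2
      = ip (h k) (\sum_(i < K) wopt i *m adjm (wopt i)) (h k).
    rewrite -(sumD1 (fun i => `|(adjm (h k) *m wopt i) 0 0| ^+ 2) k) ip_sum.
    by apply: eq_bigr => i _; exact: g2gen.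
  have Dsum : \sum_(i < K | i != k) `|(adjm (h k) *m wopt i) 0 0| ^+ 2 + ip (h k) R0opt (h k)
      = ip (h k) (\sum_(i < K) Wst i + R0st) (h k) - ip (h k) (Wst k) (h k).
    by rewrite -HS [ip _ (_ + R0opt) _]ipD -Hs -gk2; exact: gen1.
  rewrite -/(ip (h k) R0opt (h k)) Dsum gk2.
  have := hsk k; rewrite c1inv => H.
  rewrite -subr_ge0.
  have G0 : (Gam k)%:C%C != 0 :> R[i] by rewrite gt_eqF.
  set a := ip (h k) (Wst k) (h k).
  set T := ip (h k) _ (h k) in H *.
  have -> : a - (Gam k)%:C%C * (T - a + (sigma2 k)%:C%C) =
     (Gam k)%:C%C * ((1 + ((Gam k)%:C%C)^-1) * a - ((sigma2 k)%:C%C + T)).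
    exact: fid2.
  by apply: mulr_ge0; [exact: ltW | rewrite subr_ge0].
- have trw : forall k, \tr (wopt k *m adjm (wopt k)) = (adjm (wopt k) *m wopt k) 0 0.
    by move=> k; rewrite tr_col.
  rewrite /R0opt trDB !tr_sum.
  rewrite (eq_bigr (fun k => (adjm (wopt k) *m wopt k) 0 0) (fun k _ => trw k)).
  have -> : forall (X t0 tW : R[i]), X + (t0 + tW - X) = tW + t0 by move=> X t0 tW; rewrite addrC subrK addrC.
  exact: hpow.
Qed.
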